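(* Let $G$ be a finite simple graph with vertices $v_1,\dots,v_n$ ($n\ge 1$) in which no vertex is adjacent to all other vertices, let $d\ge 1$ be an integer, let $G'$ be the graph constructed from $(G,d)$ as described in the context, and let $h=n(n+1)+d$. Suppose $S_1,\dots,S_h$ are pairwise disjoint vertex sets of $G'$, each inducing a connected subgraph, such that for all $i\ne j$ some edge of $G'$ joins a vertex of $S_i$ to a vertex of $S_j$. If $S_i$ contains a top vertex, then $D_i=\{v_j : m_j\in S_i\}$ is a dominating set of $G$.
   Context: A dominating set of $G$ is a set $D$ of vertices such that every vertex of $G$ either lies in $D$ or is adjacent to a vertex of $D$. Construction of $G'$ from a graph $G$ with vertices $v_1,\dots,v_n$ and an integer $d$: say $v_i$ dominates $v_j$ if $v_i=v_j$ or $v_iv_j$ is an edge of $G$. The vertex set of $G'$ consists of top vertices $t_1,\dots,t_d$, middle vertices $m_1,\dots,m_n$, and bottom vertices $b_{j,k}$ for $1\le j\le n$, $1\le k\le n+1$. Edges: the top vertices form a clique; the middle vertices form an independent set; the bottom vertices form a clique (of size $n(n+1)$); every top vertex is adjacent to every middle vertex; there are no top–bottom edges; middle vertex $m_i$ is adjacent to bottom vertex $b_{j,k}$ if and only if $v_i$ dominates $v_j$ in $G$. *)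

(* Defs.v *)
From mathcomp Require Import all_boot.
Set Implicit Arguments. Unset Strict Implicit. Unset Printing Implicit Defensive.

Definition simple_graph (T : finType) (e : rel T) : Prop :=
  symmetric e /\ irreflexive e.

Definition dominates (T : finType) (e : rel T) (u v : T) : bool :=
  (u == v) || e u v.

Definition dominating_set (T : finType) (e : rel T) (D : {set T}) : Prop :=
  forall v : T, exists2 u, u \in D & dominates e u v.

(* Vertices of G': top t_1..t_d, middle m_1..m_n, bottom b_{j,k} (j<n, k<n+1) *)
Definition Gpv (n d : nat) : finType :=
  (('I_d + 'I_n) + ('I_n * 'I_n.+1))%type.

Definition top (n d : nat) (i : 'I_d) : Gpv n d := inl (inl i).
Definition mid (n d : nat) (i : 'I_n) : Gpv n d := inl (inr i).
Arguments mid : clear implicits.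
Definition bot (n d : nat) (j : 'I_n) (k : 'I_n.+1) : Gpv n d := inr (j, k).

Definition is_top (n d : nat) (x : Gpv n d) : bool :=
  if x is inl (inl _) then true else false.

Definition Gp_adj (n d : nat) (e : rel 'I_n) : rel (Gpv n d) :=
  fun x y =>
    match x, y with
    | inl (inl t1), inl (inl t2) => t1 != t2
    | inl (inl _), inl (inr _) => true
    | inl (inr _), inl (inl _) => true
    | inl (inr _), inl (inr _) => false
    | inr b1, inr b2 => b1 != b2
    | inl (inl _), inr _ => false
    | inr _, inl (inl _) => false
    | inl (inr i), inr (j, _) => dominates e i j
    | inr (j, _), inl (inr i) => dominates e i j
    end.

Definition induced_connected (T : finType) (adj : rel T) (S : {set T}) : Prop :=
  forall x y, x \in S -> y \in S ->
    connect [rel a b | [&& a \in S, b \in S & adj a b]] x y.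

Definition mid_set (n d : nat) (S : {set Gpv n d}) : {set 'I_n} :=
  [set j : 'I_n | mid n d j \in S].
Arguments Gp_adj : clear implicits.
Arguments mid_set : clear implicits.

(* Main.v *)
Require Import Defs.
From mathcomp Require Import all_boot.
From mathcomp Require Import zify.

Definition isX {n d : nat} (j : 'I_n) (x : Gpv n d) : bool :=
  if x is inr (j', _) then j' == j else false.
Definition is_bot {n d : nat} (x : Gpv n d) : bool :=
  if x is inr _ then true else false.
Definition is_inr {n d : nat} (z : ('I_d + ('I_n * 'I_n.+1))%type) : bool :=
  if z is inr _ then true else false.
Definition emb {n d : nat} (z : ('I_d + ('I_n * 'I_n.+1))%type) : Gpv n d :=
  match z with inl t => @top n d t | inr (a, b) => @bot n d a b end.

Theorem lemma5 (n d : nat) (e : rel 'I_n) :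
  simple_graph e ->
  1 <= n ->
  (forall v : 'I_n, exists u : 'I_n, u != v /\ ~~ e v u) ->
  1 <= d ->
  forall S : 'I_(n * n.+1 + d) -> {set Gpv n d},
    (forall i j, i != j -> [disjoint S i & S j]) ->
    (forall i, induced_connected (Gp_adj n d e) (S i)) ->
    (forall i j, i != j ->
       exists x, exists y, [/\ x \in S i, y \in S j & Gp_adj n d e x y]) ->
    forall i, (exists2 x, x \in S i & is_top x) ->
      dominating_set e (mid_set n d (S i)).
Proof.
move=> [esym eirr] n1 nouniv d1 S disj conn touch.
have hgt : 1 < n * n.+1 + d by nia.
have memdisj : forall i j x, x \in S i -> x \in S j -> i = j.
  move=> i j x xi xj; apply/eqP; apply: contraT => ij.
  by rewrite (disjointFr (disj _ _ ij) xi) in xj.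
have nonempty : forall i, exists x, x \in S i.
  move=> i.
  pose i' : 'I_(n * n.+1 + d) :=
    if val i == 0 then Ordinal hgt else Ordinal (ltnW hgt).
  have ii' : i != i'.
    rewrite /i'; case: ifP => H; apply/negP => /eqP E; move: H; by rewrite E.
  by have [x [y [xi _ _]]] := touch i i' ii'; exists x.
have lemA : forall i0, (forall x, x \in S i0 -> ~~ is_bot x) ->
    dominating_set e (mid_set n d (S i0)).
  move=> i0 nb j.
  case: (boolP [exists u, (u \in mid_set n d (S i0)) && dominates e u j])
    => [/existsP [u /andP [h1 h2]]|nex]; first by exists u.
  exfalso.
  have nd : forall u, mid n d u \in S i0 -> ~~ dominates e u j.
    move=> u mu; apply/negP => du; move/negP: nex; apply; apply/existsP.
    by exists u; rewrite inE mu du.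
  have rep : forall i, exists x, (x \in S i) && ~~ isX j x.
    move=> i; case: (eqVneq i i0) => [->|ne].
      have [x xi] := nonempty i0; exists x; rewrite xi /=.
      by move: (nb x xi); case: x {xi} => [[t|m]|[a b]].
    have [x [y [xi yi adj]]] := touch i i0 ne; exists x; rewrite xi /=.
    move: adj (nb y yi); case: x {xi} => [[t|m]|[a b]] //=.
    case: y yi => [[t|m]|[a' b']] //= yi adj _.
    apply/eqP => aj; move: (nd m yi); by rewrite -aj adj.
  pose f i := xchoose (rep i).
  have fP i : (f i \in S i) && ~~ isX j (f i) := xchooseP (rep i).
  pose g (z : ('I_(n * n.+1 + d) + 'I_n.+1)%type) : Gpv n d :=
    match z with inl i => f i | inr k => @bot n d j k end.
  have ginj : injective g.
    case=> [i|k] [i'|k'] /=.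
    - move=> E; congr inl; case/andP: (fP i) => fi _; case/andP: (fP i') => fi' _.
      rewrite E in fi; exact: memdisj fi fi'.
    - by move=> E; case/andP: (fP i) => _; rewrite E /bot /= eqxx.
    - by move=> E; case/andP: (fP i') => _; rewrite -E /bot /= eqxx.
    - by rewrite /bot; case=> ->.
  have := leq_card g ginj.
  rewrite card_sum !card_ord /Gpv !card_sum !card_prod !card_ord; lia.
have topB : forall i, (forall x, x \in S i -> ~~ is_bot x) ->
    exists t, @top n d t \in S i.
  move=> i nb; have dom := lemA i nb.
  have v0 : 'I_n := Ordinal n1.
  have [u mu _] := dom v0; rewrite inE in mu.
  have [w [wu ew]] := nouniv u.
  have [u2 mu2 du2] := dom w; rewrite inE in mu2.
  have u2u : u2 != u.
    apply/eqP => E; move: du2; rewrite E /dominates.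
    by rewrite eq_sym (negbTE wu) (negbTE ew).
  have := conn i _ _ mu mu2; case/connectP => p pth lst.
  case: p pth lst => [|y p] /=.
    by move=> _ E; rewrite /mid in E; case: E => E'; rewrite E' eqxx in u2u.
  case/andP => /and3P [_ yi adj] _ _.
  case: y yi adj => [[t|m]|b] yi adj //; first by exists t.
  by move: (nb _ yi).
move=> i [x xi xt].
case: (boolP [exists b, (inr b : Gpv n d) \in S i]) => [/existsP [[a k] bi]|nob];
  last first.
  apply: lemA => y yi; apply/negP; case: y yi => [y|b] yi //= _.
  by move/negP: nob; apply; apply/existsP; exists b.
exfalso.
case: x xi xt => [[t0|m]|b] //= xi _.
have rep2 : forall i', exists z, (emb z \in S i') && ((i' == i) ==> is_inr z).
  move=> i'; case: (eqVneq i' i) => [->|ne].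
    by exists (inr (a, k)); rewrite /= bi.
  case: (boolP [exists b, (inr b : Gpv n d) \in S i'])
    => [/existsP [[a' k'] bi']|nob'].
    by exists (inr (a', k')); rewrite /= bi'.
  have [t ti] : exists t, @top n d t \in S i'.
    apply: topB => y yi; apply/negP; case: y yi => [y|b] yi //= _.
    by move/negP: nob'; apply; apply/existsP; exists b.
  by exists (inl t); rewrite /= ti.
pose F (o : option 'I_(n * n.+1 + d)) :=
  match o with Some i' => xchoose (rep2 i') | None => inl t0 end.
have Finj : injective F.
  case=> [i1|] [i2|] /=.
  - move=> E; congr Some.
    case/andP: (xchooseP (rep2 i1)) => h1 _; case/andP: (xchooseP (rep2 i2)) => h2 _.
    rewrite E in h1; exact: memdisj h1 h2.
  - move=> E; case/andP: (xchooseP (rep2 i1)) => h1 h1'.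
    rewrite E /= in h1 h1'.
    have ei : i1 = i by apply: memdisj h1 xi.
    by rewrite ei eqxx in h1'.
  - move=> E; case/andP: (xchooseP (rep2 i2)) => h1 h1'.
    rewrite -E /= in h1 h1'.
    have ei : i2 = i by apply: memdisj h1 xi.
    by rewrite ei eqxx in h1'.
  - by [].
have := leq_card F Finj.
rewrite card_option !card_ord card_sum card_prod !card_ord; lia.
Qed.
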